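(* Consider the single-armed lazy restless bandit described in the context with fixed subsidy $\eta$ and $p_{0,0}>p_{1,0}$, and let $b=\min\left\{1,\frac{R_1-R_0}{\rho_1-\rho_0}\right\}$. Then $\pi\mapsto V_S(\pi)-V_{NS}(\pi)$ is decreasing on $[0,1]$ under any of the following conditions: (1) $K$ is large, i.e. in the large-$K$ model where $\gamma_2(\pi)$ is replaced by the constant $q$; (2) for any $K>1$, when $0<p_{0,0}-p_{1,0}<b/5$ and $\beta\in(0,1)$; (3) for any $K>1$, when $\beta\in(0,b/5)$.
   Context: Single-armed lazy restless bandit: an arm has a hidden state in $\{0,1\}$ evolving as a two-state Markov chain with transition probabilities $p_{i,j}$ ($p_{i,0}+p_{i,1}=1$). During each session the chain makes exactly $K\ge1$ transitions. In each session the decision maker plays the arm or not. If played with the arm in state $i$ at session start, an ACK is received with probability $\rho_i\in[0,1]$ and the expected reward is $R_i$; if not played, subsidy $\eta$ is received and nothing observed. Discount $\beta\in(0,1)$. Standing assumptions: $\rho_0<\rho_1$, $R_0<R_1$. Belief $\pi\in[0,1]$ = probability of state $0$. $R_S(\pi)=\pi R_0+(1-\pi)R_1$, $\rho(\pi)=\pi\rho_0+(1-\pi)\rho_1$, $\gamma_1(\pi)=\frac{(1-\pi)\rho_1p_{1,0}+\pi\rho_0p_{0,0}}{\rho_1(1-\pi)+\rho_0\pi}$, $\gamma_0(\pi)=\frac{(1-\pi)(1-\rho_1)p_{1,0}+\pi(1-\rho_0)p_{0,0}}{(1-\rho_1)(1-\pi)+(1-\rho_0)\pi}$, $\gamma_2(\pi)=(p_{0,0}-p_{1,0})^K\pi+p_{1,0}\sum_{j=0}^{K-1}(p_{0,0}-p_{1,0})^j$.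 $V_S,V_{NS},V$ are the unique bounded solution of $V_S(\pi)=R_S(\pi)+\beta\big(\rho(\pi)V(\gamma_1(\pi))+(1-\rho(\pi))V(\gamma_0(\pi))\big)$, $V_{NS}(\pi)=\eta+\beta V(\gamma_2(\pi))$, $V(\pi)=\max\{V_S(\pi),V_{NS}(\pi)\}$ (a term with zero coefficient is taken to be $0$). Let $q=\frac{p_{1,0}}{1-(p_{0,0}-p_{1,0})}$; the ''large-$K$ model'' is the same dynamic program with $\gamma_2(\pi)$ replaced by the constant $q$ for all $\pi$. *)

(* Defs.v *)
From Stdlib Require Import Reals.
Open Scope R_scope.

(* Parameters:
   p00 = p_{0,0}, p10 = p_{1,0}  (p_{0,1} = 1 - p00, p_{1,1} = 1 - p10),
   rho0, rho1 (ACK probabilities), R0, R1 (expected rewards),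
   eta (subsidy), beta (discount).  Belief pi = P(state 0). *)

Definition RS (R0 R1 pi : R) : R := pi * R0 + (1 - pi) * R1.
Definition rho (rho0 rho1 pi : R) : R := pi * rho0 + (1 - pi) * rho1.

Definition gamma1 (p00 p10 rho0 rho1 pi : R) : R :=
  ((1 - pi) * rho1 * p10 + pi * rho0 * p00) / (rho1 * (1 - pi) + rho0 * pi).

Definition gamma0 (p00 p10 rho0 rho1 pi : R) : R :=
  ((1 - pi) * (1 - rho1) * p10 + pi * (1 - rho0) * p00)
  / ((1 - rho1) * (1 - pi) + (1 - rho0) * pi).

Fixpoint geom_sum (K : nat) (d : R) : R :=
  match K with
  | O => 0
  | S n => geom_sum n d + d ^ n
  end.

(* gamma_2 : belief after K unobserved transitions *)
Definition gamma2 (K : nat) (p00 p10 pi : R) : R :=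
  (p00 - p10) ^ K * pi + p10 * geom_sum K (p00 - p10).

(* stationary probability of state 0, used by the large-K model *)
Definition qstat (p00 p10 : R) : R := p10 / (1 - (p00 - p10)).

Definition bounded01 (f : R -> R) : Prop :=
  exists M, forall pi, 0 <= pi <= 1 -> Rabs (f pi) <= M.

(* A term with zero coefficient is 0: with Rocq's
   total division (x/0 = 0) the product  rho(pi) * V(gamma1 pi)  is 0 whenever
   rho(pi) = 0, and similarly for the other term. *)
Definition bellman_sol (p00 p10 rho0 rho1 R0 R1 eta beta : R) (g2 : R -> R)
    (VS VNS V : R -> R) : Prop :=
  bounded01 VS /\ bounded01 VNS /\ bounded01 V /\
  forall pi, 0 <= pi <= 1 ->
    VS pi = RS R0 R1 pi
            + beta * (rho rho0 rho1 pi * V (gamma1 p00 p10 rho0 rho1 pi)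
                      + (1 - rho rho0 rho1 pi) * V (gamma0 p00 p10 rho0 rho1 pi))
    /\ VNS pi = eta + beta * V (g2 pi)
    /\ V pi = Rmax (VS pi) (VNS pi).

(* "decreasing" on [0,1], read as non-increasing *)
Definition noninc01 (f : R -> R) : Prop :=
  forall x y, 0 <= x -> x <= y -> y <= 1 -> f y <= f x.

(* Main.v *)
Require Import Defs.
From Stdlib Require Import Reals Lra Lia Psatz.
Open Scope R_scope.

Lemma Rdiv_le_0_compat a b : 0 <= a -> 0 < b -> 0 <= a / b.
Proof. intros; apply Rle_mult_inv_pos; auto. Qed.

Lemma Rabs_le_split z M : Rabs z <= M -> -M <= z <= M.
Proof. unfold Rabs; destruct (Rcase_abs z); lra. Qed.

Lemma Rmax_diff a b c d t : a - c <= t -> b - d <= t -> Rmax a b - Rmax c d <= t.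
Proof. unfold Rmax; destruct (Rle_dec a b); destruct (Rle_dec c d); lra. Qed.

Lemma lim_zero z C beta : 0 <= C -> 0 < beta < 1 -> (forall n, z <= C * beta ^ n) -> z <= 0.
Proof.
  intros HC Hb H.
  destruct (Rle_dec z 0) as [h|h]; [exact h|]. exfalso.
  assert (Hz : 0 < z) by lra.
  assert (Hab : Rabs beta < 1) by (rewrite Rabs_pos_eq; lra).
  destruct (pow_lt_1_zero beta Hab (z / (C + 1))) as [N HN].
  { apply Rdiv_lt_0_compat; lra. }
  specialize (HN N (le_n N)). specialize (H N).
  rewrite Rabs_pos_eq in HN by (apply pow_le; lra).
  assert (Hq : z / (C + 1) * (C + 1) = z) by (field; lra).
  assert (C * beta ^ N <= C * (z / (C+1))) by (apply Rmult_le_compat_l; lra).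
  assert (0 < z / (C+1)) by (apply Rdiv_lt_0_compat; lra).
  nra.
Qed.

Lemma rho_bounds rho0 rho1 pi : rho0 <= rho1 -> 0 <= pi <= 1 ->
  rho0 <= rho rho0 rho1 pi <= rho1.
Proof. intros; unfold rho; nra. Qed.

Lemma rho_diff rho0 rho1 x y : rho rho0 rho1 x - rho rho0 rho1 y = (rho1 - rho0) * (y - x).
Proof. unfold rho; ring. Qed.

Definition c1 rho0 rho1 pi := rho0 * pi / rho rho0 rho1 pi.
Definition c0 rho0 rho1 pi := (1 - rho0) * pi / (1 - rho rho0 rho1 pi).

Lemma g1_form p00 p10 rho0 rho1 pi : rho rho0 rho1 pi > 0 ->
  gamma1 p00 p10 rho0 rho1 pi = p10 + (p00 - p10) * c1 rho0 rho1 pi.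
Proof.
  intros H; unfold gamma1, c1; unfold rho in *.
  field; lra.
Qed.

Lemma g0_form p00 p10 rho0 rho1 pi : 1 - rho rho0 rho1 pi > 0 ->
  gamma0 p00 p10 rho0 rho1 pi = p10 + (p00 - p10) * c0 rho0 rho1 pi.
Proof.
  intros H; unfold gamma0, c0; unfold rho in *.
  field; lra.
Qed.

Lemma c1_range rho0 rho1 pi : 0 <= rho0 -> rho0 <= rho1 -> 0 <= pi <= 1 ->
  rho rho0 rho1 pi > 0 -> 0 <= c1 rho0 rho1 pi <= 1.
Proof.
  intros h0 h01 hp hr; unfold c1; split.
  - apply Rdiv_le_0_compat; nra.
  - apply (Rmult_le_reg_r (rho rho0 rho1 pi)); auto.
    unfold Rdiv; rewrite Rmult_assoc, Rinv_l by lra. unfold rho in *; nra.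
Qed.

Lemma c0_range rho0 rho1 pi : rho1 <= 1 -> rho0 <= rho1 -> 0 <= pi <= 1 ->
  1 - rho rho0 rho1 pi > 0 -> 0 <= c0 rho0 rho1 pi <= 1.
Proof.
  intros h0 h01 hp hr; unfold c0; split.
  - apply Rdiv_le_0_compat; nra.
  - apply (Rmult_le_reg_r (1 - rho rho0 rho1 pi)); auto.
    unfold Rdiv; rewrite Rmult_assoc, Rinv_l by lra. unfold rho in *; nra.
Qed.

Lemma c1_step rho0 rho1 x y : rho rho0 rho1 x > 0 -> rho rho0 rho1 y > 0 ->
  rho rho0 rho1 y * (c1 rho0 rho1 y - c1 rho0 rho1 x)
  = (y - x) * rho1 * (rho0 / rho rho0 rho1 x).
Proof. intros hx hy; unfold c1; unfold rho in *; field; lra. Qed.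

Lemma c0_step rho0 rho1 x y : 1 - rho rho0 rho1 x > 0 -> 1 - rho rho0 rho1 y > 0 ->
  (1 - rho rho0 rho1 x) * (c0 rho0 rho1 y - c0 rho0 rho1 x)
  = (y - x) * (1 - rho0) * ((1 - rho1) / (1 - rho rho0 rho1 y)).
Proof. intros hx hy; unfold c0; unfold rho in *; field; lra. Qed.

Lemma ratio01 a r : 0 <= a -> a <= r -> 0 < r -> 0 <= a / r <= 1.
Proof.
  intros; split. apply Rdiv_le_0_compat; lra.
  apply (Rmult_le_reg_r r); auto. unfold Rdiv; rewrite Rmult_assoc, Rinv_l by lra. lra.
Qed.

Lemma c10 rho0 rho1 x y : 0 <= rho0 -> rho0 <= rho1 -> rho1 <= 1 -> 0 <= x -> x <= y -> y <= 1 ->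
  rho rho0 rho1 x > 0 -> 1 - rho rho0 rho1 y > 0 ->
  c1 rho0 rho1 x <= c0 rho0 rho1 y.
Proof.
  intros h0 h01 h1 hx hxy hy rx ry.
  pose proof (rho_bounds rho0 rho1 x h01 (conj hx (Rle_trans _ _ _ hxy hy))) as bx.
  pose proof (rho_bounds rho0 rho1 y h01 (conj (Rle_trans _ _ _ hx hxy) hy)) as by_.
  set (rx' := rho rho0 rho1 x) in *. set (ry' := rho rho0 rho1 y) in *.
  assert (key : rho0 * x * (1 - ry') <= (1 - rho0) * y * rx').
  { assert (rho0 * x * (1 - ry') <= rho0 * y * (1 - ry')) by (apply Rmult_le_compat_r; nra).
    assert (rho0 * (1 - ry') <= (1 - rho0) * rx') by nra.
    nra. }
  unfold c1, c0; fold rx' ry'.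
  assert (E : (1 - rho0) * y / (1 - ry') - rho0 * x / rx'
              = ((1 - rho0) * y * rx' - rho0 * x * (1 - ry')) / (rx' * (1 - ry'))) by (field; lra).
  assert (0 <= ((1 - rho0) * y * rx' - rho0 * x * (1 - ry')) / (rx' * (1 - ry'))).
  { apply Rdiv_le_0_compat; nra. }
  lra.
Qed.

Lemma pos_of_ne a : 0 <= a -> a <> 0 -> 0 < a.
Proof. intros h n; destruct (Rle_lt_or_eq_dec 0 a h) as [l|e]; [exact l| now (exfalso; apply n)]. Qed.

Definition Ef (p00 p10 rho0 rho1 : R) (V : R -> R) pi :=
  rho rho0 rho1 pi * V (gamma1 p00 p10 rho0 rho1 pi)
  + (1 - rho rho0 rho1 pi) * V (gamma0 p00 p10 rho0 rho1 pi).

Lemma Ef_opp p00 p10 rho0 rho1 V pi :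
  Ef p00 p10 rho0 rho1 (fun t => - V t) pi = - Ef p00 p10 rho0 rho1 V pi.
Proof. unfold Ef; ring. Qed.

Lemma E_bound p00 p10 rho0 rho1 (V : R -> R) A e
  (Hp00 : 0 <= p00 <= 1) (Hp10 : 0 <= p10 <= 1)
  (Hrho0 : 0 <= rho0 <= 1) (Hrho1 : 0 <= rho1 <= 1) (Hrho : rho0 < rho1)
  (Hp : p10 <= p00) (HA : 0 <= A) (He : 0 <= e)
  (HV : forall a b, 0 <= a -> a <= b -> b <= 1 -> V a - V b <= A * (b - a) + e)
  x y (hx : 0 <= x) (hxy : x <= y) (hy : y <= 1) :
  Ef p00 p10 rho0 rho1 V x - Ef p00 p10 rho0 rho1 V y
  <= 3 * A * (p00 - p10) * (y - x) + e.
Proof.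
  set (d := p00 - p10).
  pose proof (rho_bounds rho0 rho1 x (Rlt_le _ _ Hrho) (conj hx (Rle_trans _ _ _ hxy hy))) as bx.
  pose proof (rho_bounds rho0 rho1 y (Rlt_le _ _ Hrho) (conj (Rle_trans _ _ _ hx hxy) hy)) as by_.
  pose proof (rho_diff rho0 rho1 x y) as rd.
  set (rx := rho rho0 rho1 x) in *. set (ry := rho rho0 rho1 y) in *.
  assert (Hid : Ef p00 p10 rho0 rho1 V x - Ef p00 p10 rho0 rho1 V y =
     ry * (V (gamma1 p00 p10 rho0 rho1 x) - V (gamma1 p00 p10 rho0 rho1 y))
     + (1 - rx) * (V (gamma0 p00 p10 rho0 rho1 x) - V (gamma0 p00 p10 rho0 rho1 y))
     + (rx - ry) * (V (gamma1 p00 p10 rho0 rho1 x) - V (gamma0 p00 p10 rho0 rho1 y))).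
  { unfold Ef; fold rx ry; ring. }
  assert (hd : 0 <= d) by (unfold d; lra).
  assert (hrr : ry <= rx) by nra.
  assert (hrr2 : rx - ry <= y - x) by nra.
  assert (hyx : 0 <= y - x) by lra.
  assert (T1 : ry * (V (gamma1 p00 p10 rho0 rho1 x) - V (gamma1 p00 p10 rho0 rho1 y))
               <= A * d * (y - x) + ry * e).
  { destruct (Req_dec ry 0) as [z|nz].
    - rewrite z. assert (0 <= A * d * (y - x)) by (apply Rmult_le_pos; [apply Rmult_le_pos|]; lra). lra.
    - assert (rpy : ry > 0) by (apply pos_of_ne; [lra|exact nz]). assert (rpx : rx > 0) by lra.
      pose proof (c1_step rho0 rho1 x y rpx rpy) as st. fold rx ry in st.
      pose proof (ratio01 rho0 rx (proj1 Hrho0) (proj1 bx) rpx) as rt.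
      pose proof (c1_range rho0 rho1 x (proj1 Hrho0) (Rlt_le _ _ Hrho) (conj hx (Rle_trans _ _ _ hxy hy)) rpx).
      pose proof (c1_range rho0 rho1 y (proj1 Hrho0) (Rlt_le _ _ Hrho) (conj (Rle_trans _ _ _ hx hxy) hy) rpy).
      rewrite (g1_form p00 p10 rho0 rho1 x rpx), (g1_form p00 p10 rho0 rho1 y rpy). fold d.
      set (cx := c1 rho0 rho1 x) in *. set (cy := c1 rho0 rho1 y) in *.
      set (q := rho0 / rx) in *.
      assert (mon : cx <= cy).
      { assert (0 <= ry * (cy - cx)) by (rewrite st; apply Rmult_le_pos; [apply Rmult_le_pos|]; lra).
        nra. }
      assert (HV1 := HV (p10 + d * cx) (p10 + d * cy)).
      assert (HV2 : V (p10 + d * cx) - V (p10 + d * cy) <= A * (d * (cy - cx)) + e).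
      { replace (d * (cy - cx)) with ((p10 + d*cy) - (p10 + d*cx)) by ring.
        apply HV; unfold d in *; nra. }
      assert (ry * (V (p10 + d * cx) - V (p10 + d * cy)) <= ry * (A * (d * (cy - cx)) + e))
        by (apply Rmult_le_compat_l; lra).
      assert (ry * (A * (d * (cy - cx))) = A * d * ((y - x) * rho1 * q)) by (rewrite <- st; ring).
      assert ((y - x) * rho1 * q <= y - x).
      { assert (rho1 * q <= 1) by nra. nra. }
      assert (A * d * ((y - x) * rho1 * q) <= A * d * (y - x)).
      { apply Rmult_le_compat_l; [apply Rmult_le_pos|]; lra. }
      lra. }
  assert (T2 : (1 - rx) * (V (gamma0 p00 p10 rho0 rho1 x) - V (gamma0 p00 p10 rho0 rho1 y))
               <= A * d * (y - x) + (1 - rx) * e).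
  { destruct (Req_dec (1 - rx) 0) as [z|nz].
    - rewrite z. assert (0 <= A * d * (y - x)) by (apply Rmult_le_pos; [apply Rmult_le_pos|]; lra). lra.
    - assert (rpx : 1 - rx > 0) by (apply pos_of_ne; [lra|exact nz]). assert (rpy : 1 - ry > 0) by lra.
      pose proof (c0_step rho0 rho1 x y rpx rpy) as st. fold rx ry in st.
      pose proof (ratio01 (1 - rho1) (1 - ry) ltac:(lra) ltac:(lra) rpy) as rt.
      pose proof (c0_range rho0 rho1 x (proj2 Hrho1) (Rlt_le _ _ Hrho) (conj hx (Rle_trans _ _ _ hxy hy)) rpx).
      pose proof (c0_range rho0 rho1 y (proj2 Hrho1) (Rlt_le _ _ Hrho) (conj (Rle_trans _ _ _ hx hxy) hy) rpy).
      rewrite (g0_form p00 p10 rho0 rho1 x rpx), (g0_form p00 p10 rho0 rho1 y rpy). fold d.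
      set (cx := c0 rho0 rho1 x) in *. set (cy := c0 rho0 rho1 y) in *.
      set (q := (1 - rho1) / (1 - ry)) in *.
      assert (mon : cx <= cy).
      { assert (0 <= (1 - rx) * (cy - cx)) by (rewrite st; apply Rmult_le_pos; [apply Rmult_le_pos|]; lra).
        nra. }
      assert (HV2 : V (p10 + d * cx) - V (p10 + d * cy) <= A * (d * (cy - cx)) + e).
      { replace (d * (cy - cx)) with ((p10 + d*cy) - (p10 + d*cx)) by ring.
        apply HV; unfold d in *; nra. }
      assert ((1 - rx) * (V (p10 + d * cx) - V (p10 + d * cy)) <= (1 - rx) * (A * (d * (cy - cx)) + e))
        by (apply Rmult_le_compat_l; lra).
      assert ((1 - rx) * (A * (d * (cy - cx))) = A * d * ((y - x) * (1 - rho0) * q)) by (rewrite <- st; ring).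
      assert ((y - x) * (1 - rho0) * q <= y - x).
      { assert ((1 - rho0) * q <= 1) by nra. nra. }
      assert (A * d * ((y - x) * (1 - rho0) * q) <= A * d * (y - x)).
      { apply Rmult_le_compat_l; [apply Rmult_le_pos|]; lra. }
      lra. }
  assert (T3 : (rx - ry) * (V (gamma1 p00 p10 rho0 rho1 x) - V (gamma0 p00 p10 rho0 rho1 y))
               <= A * d * (y - x) + (rx - ry) * e).
  { destruct (Req_dec (rx - ry) 0) as [z|nz].
    - rewrite z. assert (0 <= A * d * (y - x)) by (apply Rmult_le_pos; [apply Rmult_le_pos|]; lra). lra.
    - assert (hr0 : rx - ry > 0) by (apply pos_of_ne; [nra|exact nz]). assert (rpx : rx > 0) by lra. assert (rpy : 1 - ry > 0) by lra.
      pose proof (c1_range rho0 rho1 x (proj1 Hrho0) (Rlt_le _ _ Hrho) (conj hx (Rle_trans _ _ _ hxy hy)) rpx).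
      pose proof (c0_range rho0 rho1 y (proj2 Hrho1) (Rlt_le _ _ Hrho) (conj (Rle_trans _ _ _ hx hxy) hy) rpy).
      pose proof (c10 rho0 rho1 x y (proj1 Hrho0) (Rlt_le _ _ Hrho) (proj2 Hrho1) hx hxy hy rpx rpy) as mon.
      rewrite (g1_form p00 p10 rho0 rho1 x rpx), (g0_form p00 p10 rho0 rho1 y rpy). fold d.
      set (cx := c1 rho0 rho1 x) in *. set (cy := c0 rho0 rho1 y) in *.
      assert (HV2 : V (p10 + d * cx) - V (p10 + d * cy) <= A * (d * (cy - cx)) + e).
      { replace (d * (cy - cx)) with ((p10 + d*cy) - (p10 + d*cx)) by ring.
        apply HV; unfold d in *; nra. }
      assert (hr : 0 <= rx - ry) by nra.
      assert ((rx - ry) * (V (p10 + d * cx) - V (p10 + d * cy)) <= (rx - ry) * (A * (d * (cy - cx)) + e))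
        by (apply Rmult_le_compat_l; lra).
      assert (0 <= A * d) by (apply Rmult_le_pos; lra).
      assert ((rx - ry) * (cy - cx) <= y - x) by nra.
      assert (A * d * ((rx - ry) * (cy - cx)) <= A * d * (y - x)) by (apply Rmult_le_compat_l; lra).
      assert ((rx - ry) * (A * (d * (cy - cx))) = A * d * ((rx - ry) * (cy - cx))) by ring.
      lra. }
  rewrite Hid. fold d.
  assert (e = ry * e + (1 - rx) * e + (rx - ry) * e) by ring.
  lra.
Qed.

Lemma V_noninc p00 p10 rho0 rho1 R0 R1 eta beta g2 VS VNS V
  (Hp00 : 0 <= p00 <= 1) (Hp10 : 0 <= p10 <= 1)
  (Hrho0 : 0 <= rho0 <= 1) (Hrho1 : 0 <= rho1 <= 1) (Hrho : rho0 < rho1)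
  (HR : R0 < R1) (Hbeta : 0 < beta < 1) (Hp : p10 <= p00)
  (Hg2 : forall x y, 0 <= x -> x <= y -> y <= 1 -> 0 <= g2 x /\ g2 x <= g2 y /\ g2 y <= 1)
  (Hb : bellman_sol p00 p10 rho0 rho1 R0 R1 eta beta g2 VS VNS V) :
  forall x y, 0 <= x -> x <= y -> y <= 1 -> V y <= V x.
Proof.
  destruct Hb as (_ & _ & [M HM] & Heq).
  assert (HM0 : 0 <= M) by (pose proof (HM 0 ltac:(lra)); pose proof (Rabs_pos (V 0)); lra).
  assert (claim : forall n x y, 0 <= x -> x <= y -> y <= 1 -> V y - V x <= 2 * M * beta ^ n).
  { induction n as [|n IH]; intros x y hx hxy hy.
    - simpl. pose proof (Rabs_le_split _ _ (HM x ltac:(lra))).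
      pose proof (Rabs_le_split _ _ (HM y ltac:(lra))). lra.
    - destruct (Heq x ltac:(lra)) as (ESx & ENx & EVx).
      destruct (Heq y ltac:(lra)) as (ESy & ENy & EVy).
      rewrite EVx, EVy. apply Rmax_diff.
      + rewrite ESx, ESy.
        pose proof (E_bound p00 p10 rho0 rho1 (fun t => - V t) 0 (2 * M * beta ^ n)
           Hp00 Hp10 Hrho0 Hrho1 Hrho Hp ltac:(lra)
           ltac:(apply Rmult_le_pos; [lra| apply pow_le; lra])) as EB.
        assert (EB' : forall x y, 0 <= x -> x <= y -> y <= 1 ->
           Ef p00 p10 rho0 rho1 V y - Ef p00 p10 rho0 rho1 V x <= 2 * M * beta ^ n).
        { intros a b ha hab hb. 
          assert (H := EB ltac:(intros; pose proof (IH a0 b0); lra) a b ha hab hb).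
          rewrite !Ef_opp in H. lra. }
        pose proof (EB' x y hx hxy hy) as E1. unfold Ef in E1.
        assert (RS R0 R1 y - RS R0 R1 x <= 0) by (unfold RS; nra).
        simpl. nra.
      + rewrite ENx, ENy. destruct (Hg2 x y hx hxy hy) as (g1 & g2' & g3).
        pose proof (IH (g2 x) (g2 y) g1 g2' g3). simpl. nra. }
  intros x y hx hxy hy.
  assert (V y - V x <= 0); [|lra].
  apply (lim_zero _ (2 * M) beta); [lra|lra|].
  intros n; apply claim; auto.
Qed.

Lemma V_lip p00 p10 rho0 rho1 R0 R1 eta beta g2 VS VNS V c
  (Hp00 : 0 <= p00 <= 1) (Hp10 : 0 <= p10 <= 1)
  (Hrho0 : 0 <= rho0 <= 1) (Hrho1 : 0 <= rho1 <= 1) (Hrho : rho0 < rho1)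
  (HR : R0 < R1) (Hbeta : 0 < beta < 1) (Hp : p10 <= p00)
  (Hg2 : forall x y, 0 <= x -> x <= y -> y <= 1 -> 0 <= g2 x /\ g2 x <= g2 y /\ g2 y <= 1)
  (Hc0 : 0 <= c)
  (Hc : forall x y, 0 <= x -> x <= y -> y <= 1 -> g2 y - g2 x <= c * (y - x))
  (Hbc : beta * c <= 1) (Hd : 3 * beta * (p00 - p10) < 1)
  (Hb : bellman_sol p00 p10 rho0 rho1 R0 R1 eta beta g2 VS VNS V) :
  forall x y, 0 <= x -> x <= y -> y <= 1 ->
    V x - V y <= (R1 - R0) / (1 - 3 * beta * (p00 - p10)) * (y - x).
Proof.
  set (A := (R1 - R0) / (1 - 3 * beta * (p00 - p10))).
  assert (HA : A * (1 - 3 * beta * (p00 - p10)) = R1 - R0) by (unfold A; field; lra).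
  assert (HA0 : 0 <= A) by (unfold A; apply Rdiv_le_0_compat; lra).
  destruct Hb as (_ & _ & [M HM] & Heq).
  assert (HM0 : 0 <= M) by (pose proof (HM 0 ltac:(lra)); pose proof (Rabs_pos (V 0)); lra).
  assert (claim : forall n x y, 0 <= x -> x <= y -> y <= 1 ->
             V x - V y <= A * (y - x) + 2 * M * beta ^ n).
  { induction n as [|n IH]; intros x y hx hxy hy.
    - simpl. pose proof (Rabs_le_split _ _ (HM x ltac:(lra))).
      pose proof (Rabs_le_split _ _ (HM y ltac:(lra))).
      assert (0 <= A * (y - x)) by (apply Rmult_le_pos; lra). lra.
    - destruct (Heq x ltac:(lra)) as (ESx & ENx & EVx).
      destruct (Heq y ltac:(lra)) as (ESy & ENy & EVy).
      rewrite EVx, EVy. apply Rmax_diff.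
      + rewrite ESx, ESy.
        pose proof (E_bound p00 p10 rho0 rho1 V A (2 * M * beta ^ n)
           Hp00 Hp10 Hrho0 Hrho1 Hrho Hp HA0
           ltac:(apply Rmult_le_pos; [lra| apply pow_le; lra]) IH x y hx hxy hy) as E1.
        unfold Ef in E1.
        assert (RS R0 R1 x - RS R0 R1 y = (R1 - R0) * (y - x)) by (unfold RS; ring).
        simpl.
        set (E := 3 * A * (p00 - p10) * (y - x) + 2 * M * beta ^ n) in *.
        assert (beta * (E - 3 * A * (p00 - p10) * (y - x)) = beta * (2 * M * beta ^ n)) by (unfold E; ring).
        assert ((R1 - R0) * (y - x) + beta * 3 * A * (p00 - p10) * (y - x) = A * (y - x)) by (rewrite <- HA; ring).
        nra.
      + rewrite ENx, ENy. destruct (Hg2 x y hx hxy hy) as (g1 & g2' & g3).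
        pose proof (IH (g2 x) (g2 y) g1 g2' g3).
        pose proof (Hc x y hx hxy hy).
        assert (A * (g2 y - g2 x) <= A * (c * (y - x))) by (apply Rmult_le_compat_l; lra).
        assert (beta * (A * (c * (y - x))) <= A * (y - x)).
        { assert (0 <= A * (y - x)) by (apply Rmult_le_pos; lra).
          replace (beta * (A * (c * (y - x)))) with ((beta * c) * (A * (y - x))) by ring.
          nra. }
        simpl. nra. }
  intros x y hx hxy hy.
  assert (V x - V y - A * (y - x) <= 0); [|lra].
  apply (lim_zero _ (2 * M) beta); [lra|lra|].
  intros n; pose proof (claim n x y hx hxy hy); lra.
Qed.

Lemma final_gen p00 p10 rho0 rho1 R0 R1 eta beta g2 VS VNS V c
  (Hp00 : 0 <= p00 <= 1) (Hp10 : 0 <= p10 <= 1)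
  (Hrho0 : 0 <= rho0 <= 1) (Hrho1 : 0 <= rho1 <= 1) (Hrho : rho0 < rho1)
  (HR : R0 < R1) (Hbeta : 0 < beta < 1) (Hp : p10 <= p00)
  (Hg2 : forall x y, 0 <= x -> x <= y -> y <= 1 -> 0 <= g2 x /\ g2 x <= g2 y /\ g2 y <= 1)
  (Hc0 : 0 <= c)
  (Hc : forall x y, 0 <= x -> x <= y -> y <= 1 -> g2 y - g2 x <= c * (y - x))
  (Hbc : beta * c <= 1 - 3 * beta * (p00 - p10)) (Hd : 3 * beta * (p00 - p10) < 1)
  (Hb : bellman_sol p00 p10 rho0 rho1 R0 R1 eta beta g2 VS VNS V) :
  noninc01 (fun pi => VS pi - VNS pi).
Proof.
  pose proof (V_noninc _ _ _ _ _ _ _ _ _ _ _ _ Hp00 Hp10 Hrho0 Hrho1 Hrho HR Hbeta Hp Hg2 Hb) as Hmon.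
  pose proof (V_lip _ _ _ _ _ _ _ _ _ _ _ _ c Hp00 Hp10 Hrho0 Hrho1 Hrho HR Hbeta Hp Hg2 Hc0 Hc
     ltac:(nra) Hd Hb) as Hlip.
  set (A := (R1 - R0) / (1 - 3 * beta * (p00 - p10))) in *.
  assert (HA : A * (1 - 3 * beta * (p00 - p10)) = R1 - R0) by (unfold A; field; lra).
  assert (HA0 : 0 <= A) by (unfold A; apply Rdiv_le_0_compat; lra).
  destruct Hb as (_ & _ & _ & Heq).
  intros x y hx hxy hy. simpl.
  destruct (Heq x ltac:(lra)) as (ESx & ENx & _).
  destruct (Heq y ltac:(lra)) as (ESy & ENy & _).
  rewrite ESx, ESy, ENx, ENy.
  pose proof (E_bound p00 p10 rho0 rho1 (fun t => - V t) 0 0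
           Hp00 Hp10 Hrho0 Hrho1 Hrho Hp ltac:(lra) ltac:(lra)) as EB.
  assert (E1 : Ef p00 p10 rho0 rho1 V y - Ef p00 p10 rho0 rho1 V x <= 0).
  { assert (H := EB ltac:(intros; pose proof (Hmon a b); lra) x y hx hxy hy).
    rewrite !Ef_opp in H. lra. }
  unfold Ef in E1.
  destruct (Hg2 x y hx hxy hy) as (g1 & g2' & g3).
  pose proof (Hlip (g2 x) (g2 y) g1 g2' g3).
  pose proof (Hc x y hx hxy hy).
  assert (A * (g2 y - g2 x) <= A * (c * (y - x))) by (apply Rmult_le_compat_l; lra).
  assert (beta * (A * (c * (y - x))) <= (R1 - R0) * (y - x)).
  { rewrite <- HA.
    replace (beta * (A * (c * (y - x)))) with ((beta * c) * (A * (y - x))) by ring.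
    assert (0 <= A * (y - x)) by (apply Rmult_le_pos; lra).
    nra. }
  assert (RS R0 R1 y - RS R0 R1 x = - (R1 - R0) * (y - x)) by (unfold RS; ring).
  nra.
Qed.

Lemma final_const p00 p10 rho0 rho1 R0 R1 eta beta q VS VNS V
  (Hp00 : 0 <= p00 <= 1) (Hp10 : 0 <= p10 <= 1)
  (Hrho0 : 0 <= rho0 <= 1) (Hrho1 : 0 <= rho1 <= 1) (Hrho : rho0 < rho1)
  (HR : R0 < R1) (Hbeta : 0 < beta < 1) (Hp : p10 <= p00) (Hq : 0 <= q <= 1)
  (Hb : bellman_sol p00 p10 rho0 rho1 R0 R1 eta beta (fun _ => q) VS VNS V) :
  noninc01 (fun pi => VS pi - VNS pi).
Proof.
  pose proof (V_noninc _ _ _ _ _ _ _ _ (fun _ => q) _ _ _ Hp00 Hp10 Hrho0 Hrho1 Hrho HR Hbeta Hp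
     ltac:(intros; lra) Hb) as Hmon.
  destruct Hb as (_ & _ & _ & Heq).
  intros x y hx hxy hy. simpl.
  destruct (Heq x ltac:(lra)) as (ESx & ENx & _).
  destruct (Heq y ltac:(lra)) as (ESy & ENy & _).
  rewrite ESx, ESy, ENx, ENy.
  pose proof (E_bound p00 p10 rho0 rho1 (fun t => - V t) 0 0
           Hp00 Hp10 Hrho0 Hrho1 Hrho Hp ltac:(lra) ltac:(lra)) as EB.
  assert (E1 : Ef p00 p10 rho0 rho1 V y - Ef p00 p10 rho0 rho1 V x <= 0).
  { assert (H := EB ltac:(intros; pose proof (Hmon a b); lra) x y hx hxy hy).
    rewrite !Ef_opp in H. lra. }
  unfold Ef in E1.
  assert (RS R0 R1 y - RS R0 R1 x = - (R1 - R0) * (y - x)) by (unfold RS; ring).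
  nra.
Qed.

Lemma geom_closed K d : (1 - d) * geom_sum K d = 1 - d ^ K.
Proof.
  induction K as [|K IH].
  - simpl. ring.
  - change (geom_sum (S K) d) with (geom_sum K d + d ^ K).
    simpl. rewrite Rmult_plus_distr_l, IH. ring.
Qed.

Lemma geom_succ K d : geom_sum (S K) d = d * geom_sum K d + 1.
Proof.
  change (geom_sum (S K) d) with (geom_sum K d + d ^ K).
  pose proof (geom_closed K d). lra.
Qed.

Lemma gamma2_range K p00 p10 pi : 0 <= p00 <= 1 -> 0 <= p10 <= 1 -> 0 <= pi <= 1 ->
  0 <= gamma2 K p00 p10 pi <= 1.
Proof.
  intros h0 h1 hp. induction K as [|K IH].
  - unfold gamma2; simpl. lra.
  - assert (E : gamma2 (S K) p00 p10 pi = (p00 - p10) * gamma2 K p00 p10 pi + p10).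
    { unfold gamma2. rewrite geom_succ. simpl. ring. }
    rewrite E. nra.
Qed.

Lemma gamma2_diff K p00 p10 x y :
  gamma2 K p00 p10 y - gamma2 K p00 p10 x = (p00 - p10) ^ K * (y - x).
Proof. unfold gamma2; ring. Qed.

Lemma pow_le1 d n : 0 <= d <= 1 -> d ^ n <= 1.
Proof. intros h; induction n; simpl; [lra|]. pose proof (pow_le d n (proj1 h)). nra. Qed.

Lemma case_K p00 p10 rho0 rho1 R0 R1 eta beta K VS VNS V
  (Hp00 : 0 <= p00 <= 1) (Hp10 : 0 <= p10 <= 1)
  (Hrho0 : 0 <= rho0 <= 1) (Hrho1 : 0 <= rho1 <= 1) (Hrho : rho0 < rho1)
  (HR : R0 < R1) (Hbeta : 0 < beta < 1) (Hp : p00 > p10) (HK : (1 <= K)%nat)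
  (Hcond : beta * ((p00 - p10) ^ K + 3 * (p00 - p10)) < 1)
  (Hb : bellman_sol p00 p10 rho0 rho1 R0 R1 eta beta (gamma2 K p00 p10) VS VNS V) :
  noninc01 (fun pi => VS pi - VNS pi).
Proof.
  assert (hd : 0 <= p00 - p10 <= 1) by lra.
  pose proof (pow_le (p00 - p10) K (proj1 hd)) as hc0.
  apply (final_gen p00 p10 rho0 rho1 R0 R1 eta beta (gamma2 K p00 p10) VS VNS V ((p00 - p10) ^ K));
    auto; try lra.
  - intros x y hx hxy hy. pose proof (gamma2_diff K p00 p10 x y).
    pose proof (gamma2_range K p00 p10 x Hp00 Hp10 ltac:(lra)).
    pose proof (gamma2_range K p00 p10 y Hp00 Hp10 ltac:(lra)).
    assert (0 <= (p00 - p10) ^ K * (y - x)) by (apply Rmult_le_pos; lra).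
    lra.
  - intros x y hx hxy hy. rewrite gamma2_diff. lra.
  - assert (0 <= beta * (p00 - p10) ^ K) by (apply Rmult_le_pos; lra). nra.
Qed.

Theorem lemma4 (p00 p10 rho0 rho1 R0 R1 eta beta : R)
  (Hp00 : 0 <= p00 <= 1) (Hp10 : 0 <= p10 <= 1)
  (Hrho0 : 0 <= rho0 <= 1) (Hrho1 : 0 <= rho1 <= 1)
  (Hrho : rho0 < rho1) (HR : R0 < R1) (Hbeta : 0 < beta < 1)
  (Hp : p00 > p10) :
  let b := Rmin 1 ((R1 - R0) / (rho1 - rho0)) in
  (* (1) large-K model: gamma2 replaced by the constant q *)
  (forall VS VNS V : R -> R,
     bellman_sol p00 p10 rho0 rho1 R0 R1 eta beta (fun _ => qstat p00 p10) VS VNS V ->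
     noninc01 (fun pi => VS pi - VNS pi))
  /\
  (* (2) any K > 1, with 0 < p00 - p10 < b/5 *)
  (forall (K : nat), (1 < K)%nat -> 0 < p00 - p10 < b / 5 ->
   forall VS VNS V : R -> R,
     bellman_sol p00 p10 rho0 rho1 R0 R1 eta beta (gamma2 K p00 p10) VS VNS V ->
     noninc01 (fun pi => VS pi - VNS pi))
  /\
  (* (3) any K > 1, with beta < b/5 *)
  (forall (K : nat), (1 < K)%nat -> beta < b / 5 ->
   forall VS VNS V : R -> R,
     bellman_sol p00 p10 rho0 rho1 R0 R1 eta beta (gamma2 K p00 p10) VS VNS V ->
     noninc01 (fun pi => VS pi - VNS pi)).
Proof.
  intros b.
  assert (hb1 : b <= 1) by apply Rmin_l.
  assert (hd : 0 < p00 - p10 <= 1) by lra.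
  split; [|split].
  - intros VS VNS V Hb.
    apply (final_const p00 p10 rho0 rho1 R0 R1 eta beta (qstat p00 p10) VS VNS V); auto; try lra.
    unfold qstat.
    destruct (Req_dec p10 0) as [z|nz].
    + rewrite z. unfold Rdiv. rewrite Rmult_0_l. lra.
    + assert (0 < p10) by (apply pos_of_ne; [lra|exact nz]).
      apply ratio01; lra.
  - intros K HK Hd VS VNS V Hb.
    apply (case_K p00 p10 rho0 rho1 R0 R1 eta beta K VS VNS V); auto; try lia.
    assert ((p00 - p10) ^ K <= p00 - p10).
    { destruct K as [|K']; [lia|]. simpl. pose proof (pow_le1 (p00 - p10) K' ltac:(lra)). nra. }
    nra.
  - intros K HK Hd VS VNS V Hb.
    apply (case_K p00 p10 rho0 rho1 R0 R1 eta beta K VS VNS V); auto; try lia.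
    pose proof (pow_le1 (p00 - p10) K ltac:(lra)). nra.
Qed.
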